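(* In an execution of Algorithm A1 (described in the context) with $n>3t$ and a weak common coin, if at the start of some round $r$ all non-faulty processes have the same estimate $\mathit{est}=v\in\{0,1\}$, then every non-faulty process decides $v$ in round $r$ (if it has not already decided), and no non-faulty process ever decides a value different from $v$ in any later round.
   Context: System model: $n$ asynchronous sequential processes $p_1,\dots,p_n$, of which at most $t$ are Byzantine (behave arbitrarily, may collude); the others are non-faulty. Processes communicate over reliable asynchronous point-to-point channels between every pair: messages between non-faulty processes are eventually delivered, unaltered, not duplicated, and the receiver knows the identity of the sender; there is no bound on delays and the adversary controls delivery order. ''Broadcast $m$'' means sending $m$ to every process (including oneself). When counting messages ''received from $k$ distinct processes'', at most one message per sender is counted. BV-Broadcast with tag $T$ and input $v$ at process $p_i$: set $\mathit{bin}_i\leftarrow\emptyset$; broadcast $\mathrm{BVAL}(T,v)$; return (a reference to) $\mathit{bin}_i$, which may keep growing afterwards. In the background, for every value $x$: when $\mathrm{BVAL}(T,x)$ has been received from $t+1$ distinct processes and $p_i$ has not yet broadcast $\mathrm{BVAL}(T,x)$, $p_i$ broadcasts $\mathrm{BVAL}(T,x)$; when $\mathrm{BVAL}(T,x)$ has been received from $2t+1$ distinct processes, $p_i$ adds $x$ to $\mathit{bin}_i$. SBV-Broadcast with tag $T$ and input $v$ at $p_i$: $\mathit{bin}_i\leftarrow$ BV-Broadcast with tag $T$ and input $v$; wait until $\mathit{bin}_i\neq\emptyset$; broadcast $\mathrm{AUX}(T,w)$ for some $w\in\mathit{bin}_i$; wait until there are $n-t$ distinct processes $p_j$ from which a message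 $\mathrm{AUX}(T,w_j)$ has been received with $w_j\in \mathit{bin}_i$ (the current value of the growing set); let $\mathit{view}_i$ be the set of these values $w_j$; return $(\mathit{view}_i,\mathit{bin}_i)$ ($\mathit{view}_i$ is fixed upon return, $\mathit{bin}_i$ may still grow). Weak common coin with parameter $d\ge 2$: for each round $r$, a call $\mathsf{random}()$ in round $r$ returns a bit to each non-faulty caller; with probability $1/d$ all non-faulty processes get $0$, with probability $1/d$ all get $1$, and with probability $(d-2)/d$ they may get different values. The round-$r$ output is random and unpredictable, and is not revealed to anyone before at least one non-faulty process has called $\mathsf{random}()$ in round $r$. Algorithm A1 (binary consensus), at non-faulty $p_i$ proposing $v_i\in\{0,1\}$: set $\mathit{est}\leftarrow v_i$, $r\leftarrow 0$. Repeat forever: (1) $r\leftarrow r+1$. (2) $(\mathit{view}_0,\mathit{bin})\leftarrow$ SBV-Broadcast with tag $(r,0)$ and input $\mathit{est}$. (3) Broadcast $\mathrm{AUXSET}(r,\mathit{view}_0)$. (4) Wait until there are $n-t$ distinct processes $p_j$ from which a message $\mathrm{AUXSET}(r,S_j)$ has been received with $S_j\subseteq\mathit{bin}$ (current value), and let $\mathit{view}_1=\bigcup_j S_j$. (5) If $\mathit{view}_1=\{w\}$ then $\mathit{est}\leftarrow w$, else $\mathit{est}\leftarrow\bot$. (6) $(\mathit{view}_2,\_)\leftarrow$ SBV-Broadcast with tag $(r,1)$ and input $\mathit{est}\in\{0,1,\bot\}$. (7) $s\leftarrow\mathsf{random}()$. (8) If $\mathit{view}_2=\{v\}$ with $v\neq\bot$: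 $\mathit{est}\leftarrow v$ and decide $v$ if not yet decided; if $\mathit{view}_2=\{v,\bot\}$ with $v\in\{0,1\}$: $\mathit{est}\leftarrow v$; if $\mathit{view}_2=\{\bot\}$: $\mathit{est}\leftarrow s$. *)

(* Defs.v *)
From HB Require Import structures.
From mathcomp Require Import all_boot.
Set Implicit Arguments. Unset Strict Implicit. Unset Printing Implicit Defensive.

(* Values: [Some b] is the bit b, [None] is the default value ⊥. *)
Definition value := option bool.

(* Messages.  A tag T = (r, b) is represented by a round r and a bit b
   (b = false for tag (r,0), b = true for tag (r,1)). *)
Inductive msg :=
| BVAL of nat & bool & value
| AUX of nat & bool & value
| AUXSET of nat & {set value}.

Definition msg_enc (m : msg) :
  (nat * bool * value + nat * bool * value) + (nat * {set value}) :=
  match m with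
  | BVAL r b x => inl (inl (r, b, x))
  | AUX r b x => inl (inr (r, b, x))
  | AUXSET r X => inr (r, X)
  end.
Definition msg_dec (e : (nat * bool * value + nat * bool * value) + (nat * {set value})) : msg :=
  match e with
  | inl (inl (r, b, x)) => BVAL r b x
  | inl (inr (r, b, x)) => AUX r b x
  | inr (r, X) => AUXSET r X
  end.
Lemma msg_encK : cancel msg_enc msg_dec. Proof. by case. Qed.
HB.instance Definition _ := Equality.copy msg (can_type msg_encK).

(* Per-tag state of a BV-Broadcast instance at a process:
   whether it has been invoked, the set bin, and the set of values x for
   which BVAL(T,x) has already been broadcast. *)
Record tagst := TagSt { started : bool; bin : {set value}; bsent : {set value} }.
Definition tag0 : tagst := TagSt false set0 set0.

(* Program counter of the main thread of A1:
   PInc          : about to execute step (1)  r <- r+1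
   PStart        : start of round r (step (1) done), about to invoke step (2)
   PWaitBin b    : inside SBV-Broadcast with tag (r,b), waiting for bin <> ∅
   PWaitAux b    : inside SBV-Broadcast with tag (r,b), waiting for n-t AUX
   PWaitAuxset   : step (4), waiting for n-t AUXSET messages *)
Inductive pcT := PInc | PStart | PWaitBin of bool | PWaitAux of bool | PWaitAuxset.

Definition updtag (tg : nat -> bool -> tagst) (r : nat) (b : bool) (ts : tagst) :=
  fun r' b' => if (r' == r) && (b' == b) then ts else tg r' b'.

Definition est_of_view1 (V : {set value}) : value :=
  if [pick w | V == [set w]] is Some w then w else None.

(* step (8), estimate part; [coin] is the value s returned by random() *)
Definition est_after (V : {set value}) (coin : bool) (e : value) : value :=
  if [pick b : bool | V == [set Some b]] is Some b then Some b
  else if [pick b : bool | V == [set Some b; None]] is Some b then Some b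
  else if V == [set None] then Some coin
  else e.

Definition dec_after (V : {set value}) (r : nat) (d : option (bool * nat)) :=
  if [pick b : bool | V == [set Some b]] is Some b then
    (if d is None then Some (b, r) else d)
  else d.

Section Model.
Variables (n t : nat) (F : {set 'I_n}). (* F = set of Byzantine processes *)

Record lstate := LState {
  pc : pcT;
  rnd : nat;
  est : value;
  dec : option (bool * nat);          (* Some (v, r): decided v in round r *)
  tags : nat -> bool -> tagst;        (* BV-Broadcast instances *)
  rcvd : 'I_n -> msg -> bool          (* rcvd j m : m has been received from j *)
}.

Record config := Config {
  lst : 'I_n -> lstate;               (* local states (meaningful for i \notin F) *)
  net : 'I_n -> 'I_n -> msg -> bool   (* net j i m : j has sent m to i *)
}.

Definition upd (f : 'I_n -> lstate) (i : 'I_n) (s : lstate) :=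
  fun j => if j == i then s else f j.

(* p_i broadcasts m: sends m to every process, including itself *)
Definition bcast (nt : 'I_n -> 'I_n -> msg -> bool) (i : 'I_n) (m : msg) :=
  fun a b m' => nt a b m' || ((a == i) && (m' == m)).

Definition bcast_opt nt i (o : option msg) :=
  if o is Some m then bcast nt i m else nt.

Definition nrcv (s : lstate) (m : msg) := #|[set j | rcvd s j m]|.

(* Atomic steps of the main thread of A1 at a non-faulty process;
   the option msg is the message broadcast by the step, if any. *)
Inductive main_step (s : lstate) : lstate -> option msg -> Prop :=
| MS_inc : pc s = PInc ->
    main_step s (LState PStart (rnd s).+1 (est s) (dec s) (tags s) (rcvd s)) None
| MS_start : (* step (2): invoke BV-Broadcast with tag (r,0) and input est *)
    pc s = PStart ->
    main_step s
      (LState (PWaitBin false) (rnd s) (est s) (dec s)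
         (updtag (tags s) (rnd s) false (TagSt true set0 [set est s])) (rcvd s))
      (Some (BVAL (rnd s) false (est s)))
| MS_aux : forall b w, (* SBV: bin <> ∅, broadcast AUX(T,w) for some w in bin *)
    pc s = PWaitBin b -> w \in bin (tags s (rnd s) b) ->
    main_step s (LState (PWaitAux b) (rnd s) (est s) (dec s) (tags s) (rcvd s))
      (Some (AUX (rnd s) b w))
| MS_view0 : forall (J : {set 'I_n}) (f : 'I_n -> value),
    (* SBV with tag (r,0) returns view0 = f @: J; step (3) *)
    pc s = PWaitAux false -> #|J| = n - t ->
    (forall j, j \in J ->
       rcvd s j (AUX (rnd s) false (f j)) && (f j \in bin (tags s (rnd s) false))) ->
    main_step s (LState PWaitAuxset (rnd s) (est s) (dec s) (tags s) (rcvd s))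
      (Some (AUXSET (rnd s) (f @: J)))
| MS_view1 : forall (J : {set 'I_n}) (g : 'I_n -> {set value}),
    (* steps (4), (5), and invocation of BV-Broadcast in step (6) *)
    pc s = PWaitAuxset -> #|J| = n - t ->
    (forall j, j \in J ->
       rcvd s j (AUXSET (rnd s) (g j)) && (g j \subset bin (tags s (rnd s) false))) ->
    main_step s
      (LState (PWaitBin true) (rnd s) (est_of_view1 (\bigcup_(j in J) g j)) (dec s)
         (updtag (tags s) (rnd s) true
            (TagSt true set0 [set est_of_view1 (\bigcup_(j in J) g j)])) (rcvd s))
      (Some (BVAL (rnd s) true (est_of_view1 (\bigcup_(j in J) g j))))
| MS_view2 : forall (J : {set 'I_n}) (f : 'I_n -> value) (coin : bool),
    (* SBV with tag (r,1) returns view2 = f @: J; steps (7), (8) *)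
    pc s = PWaitAux true -> #|J| = n - t ->
    (forall j, j \in J ->
       rcvd s j (AUX (rnd s) true (f j)) && (f j \in bin (tags s (rnd s) true))) ->
    main_step s
      (LState PInc (rnd s) (est_after (f @: J) coin (est s))
         (dec_after (f @: J) (rnd s) (dec s)) (tags s) (rcvd s))
      None.

Definition echo_st (s : lstate) r b x :=
  let ts := tags s r b in
  LState (pc s) (rnd s) (est s) (dec s)
    (updtag (tags s) r b (TagSt (started ts) (bin ts) (x |: bsent ts))) (rcvd s).

Definition add_st (s : lstate) r b x :=
  let ts := tags s r b in
  LState (pc s) (rnd s) (est s) (dec s)
    (updtag (tags s) r b (TagSt (started ts) (x |: bin ts) (bsent ts))) (rcvd s).

Definition deliver_st (s : lstate) (j : 'I_n) (m : msg) :=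
  LState (pc s) (rnd s) (est s) (dec s) (tags s)
    (fun j' m' => rcvd s j' m' || ((j' == j) && (m' == m))).

Inductive label :=
| LMain of 'I_n
| LEcho of 'I_n & nat & bool & value     (* BV background: echo BVAL *)
| LAdd of 'I_n & nat & bool & value      (* BV background: add to bin *)
| LDeliver of 'I_n & 'I_n & msg          (* delivery to i of m sent by j *)
| LByz of 'I_n & 'I_n & msg              (* Byzantine j sends m to i *)
| LIdle.

Inductive step (c : config) : label -> config -> Prop :=
| St_main : forall i s' o, i \notin F -> main_step (lst c i) s' o ->
    step c (LMain i) (Config (upd (lst c) i s') (bcast_opt (net c) i o))
| St_echo : forall i r b x, i \notin F ->
    started (tags (lst c i) r b) ->
    t.+1 <= nrcv (lst c i) (BVAL r b x) ->
    x \notin bsent (tags (lst c i) r b) ->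
    step c (LEcho i r b x)
      (Config (upd (lst c) i (echo_st (lst c i) r b x)) (bcast (net c) i (BVAL r b x)))
| St_add : forall i r b x, i \notin F ->
    started (tags (lst c i) r b) ->
    2 * t + 1 <= nrcv (lst c i) (BVAL r b x) ->
    x \notin bin (tags (lst c i) r b) ->
    step c (LAdd i r b x) (Config (upd (lst c) i (add_st (lst c i) r b x)) (net c))
| St_deliver : forall j i m, i \notin F -> net c j i m -> ~~ rcvd (lst c i) j m ->
    step c (LDeliver j i m) (Config (upd (lst c) i (deliver_st (lst c i) j m)) (net c))
| St_byz : forall j i m, j \in F ->
    step c (LByz j i m)
      (Config (lst c) (fun a b m' => net c a b m' || [&& a == j, b == i & m' == m]))
| St_idle : step c LIdle c.

Definition init_st (v0 : bool) : lstate :=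
  LState PInc 0 (Some v0) None (fun _ _ => tag0) (fun _ _ => false).

Definition initial (c : config) : Prop :=
  (exists prop : 'I_n -> bool, forall i, i \notin F -> lst c i = init_st (prop i)) /\
  (forall a b m, net c a b m = false).

Definition fair_lab (l : label) : bool :=
  match l with
  | LByz _ _ _ | LIdle => false
  | LDeliver j _ _ => j \notin F
  | _ => true
  end.

Definition enabled (c : config) (l : label) := exists c', step c l c'.

Definition fair_execution (ex : nat -> config) (lab : nat -> label) : Prop :=
  initial (ex 0) /\
  (forall k, step (ex k) (lab k) (ex k.+1)) /\
  (forall k l, fair_lab l ->
     (forall k', k <= k' -> enabled (ex k') l) ->
     exists k', k <= k' /\ lab k' = l).

End Model.

(* Main.v *)
Require Import Defs.
From mathcomp Require Import all_boot zify.
From Stdlib Require Import Classical.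
Set Implicit Arguments. Unset Strict Implicit. Unset Printing Implicit Defensive.

Lemma sub_card_ex (T : finType) (A : {set T}) k : k <= #|A| ->
  exists J : {set T}, J \subset A /\ #|J| = k.
Proof.
move=> hk; exists [set x in take k (enum A)]; split.
  by apply/subsetP=> x; rewrite inE => /mem_take; rewrite mem_enum.
rewrite cardsE (card_uniqP _); last by apply: take_uniq; apply: enum_uniq.
by rewrite size_takel // -cardE.
Qed.

Lemma card_gt_ex (T : finType) (P : pred T) (F : {set T}) :
  #|F| < #|[set j | P j]| -> exists j, j \notin F /\ P j.
Proof.
move=> h; apply: NNPP => hn.
have : [set j | P j] \subset F.
  apply/subsetP=> j; rewrite inE => Pj; apply: contraT => jF; case: hn; by exists j.
move/subset_leq_card; lia.
Qed.

Lemma set1_pick_eq (T : finType) (x : T) : [pick w | [set x] == [set w]] = Some x.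
Proof.
case: pickP => [w /eqP H|H]; last by move: (H x); rewrite eqxx.
have : w \in [set x] by rewrite H set11.
by rewrite inE => /eqP ->.
Qed.

Lemma est_of_view1_1 v : est_of_view1 [set Some v] = Some v.
Proof. by rewrite /est_of_view1 set1_pick_eq. Qed.

Lemma pick_b1 v : [pick b : bool | [set Some v] == [set Some b]] = Some v.
Proof.
case: pickP => [w /eqP H|H]; last by move: (H v); rewrite eqxx.
have : Some w \in [set Some v] by rewrite H set11.
by rewrite inE => /eqP [->].
Qed.

Lemma est_after_1 v c e : est_after [set Some v] c e = Some v.
Proof. by rewrite /est_after pick_b1. Qed.

Lemma dec_after_1 v r d : dec_after [set Some v] r d = if d is None then Some (v, r) else d.
Proof. by rewrite /dec_after pick_b1. Qed.


Definition ordpc (p : pcT) : nat :=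
  match p with
  | PStart => 1 | PWaitBin false => 2 | PWaitAux false => 3 | PWaitAuxset => 4
  | PWaitBin true => 5 | PWaitAux true => 6 | PInc => 7 end.
Definition meas n (s : lstate n) := 7 * rnd s + ordpc (pc s).

Lemma ordpc_bnd p : 1 <= ordpc p <= 7.
Proof. by case: p => [| |[]|[]|]. Qed.

Lemma thr (a b T : nat) (Q : Prop) : b = a.+1 -> (T <= a -> Q) -> (a.+1 = T -> Q) -> T <= b -> Q.
Proof. move=> -> h1 h2 hT; case: (leqP T a) => [/h1 //|ha]; apply: h2; lia. Qed.

Lemma started_upd tg (r0 : nat) b0 B S r1 b1 :
  started (tg r1 b1) -> started (updtag tg r0 b0 (TagSt true B S) r1 b1).
Proof. by rewrite /updtag; case: ifP. Qed.
Lemma started_upd_eq tg (r0 : nat) b0 B S :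
  started (updtag tg r0 b0 (TagSt true B S) r0 b0).
Proof. by rewrite /updtag !eqxx. Qed.
Lemma upd_ne tg (r0 : nat) b0 ts r1 b1 : (r1 != r0) || (b1 != b0) ->
  updtag tg r0 b0 ts r1 b1 = tg r1 b1.
Proof. by rewrite /updtag; case/orP => /negbTE ->; rewrite ?andbF. Qed.

Lemma upd_neb tg (r0 : nat) b0 ts r1 b1 : b1 != b0 -> updtag tg r0 b0 ts r1 b1 = tg r1 b1.
Proof. by move=> h; apply: upd_ne; rewrite h orbT. Qed.
Lemma upd_ner tg (r0 : nat) b0 ts r1 b1 : r1 != r0 -> updtag tg r0 b0 ts r1 b1 = tg r1 b1.
Proof. by move=> h; apply: upd_ne; rewrite h. Qed.

Lemma dec_after_some V r0 d : d <> None -> dec_after V r0 d = d.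
Proof. by rewrite /dec_after; case: d => // ? _; case: pickP. Qed.
Lemma dec_after_none V r0 w r' : dec_after V r0 None = Some (w, r') -> r' = r0.
Proof. by rewrite /dec_after; case: pickP => // ? _ [_ ->]. Qed.

Lemma imset_const1 (T : finType) (J : {set T}) (f : T -> value) x :
  J != set0 -> (forall j, j \in J -> f j = x) -> f @: J = [set x].
Proof.
case/set0Pn => j0 hj0 hf; apply/setP => y; rewrite inE.
apply/imsetP/eqP => [[j hj ->]|->]; first exact: hf.
by exists j0 => //; rewrite hf.
Qed.

Section Main.
Variables (n t : nat) (F : {set 'I_n}) (r : nat) (v : bool).
Hypotheses (Hn : 3 * t < n) (HF : #|F| <= t).

Definition legit (m : msg) :=
  match m with
  | BVAL r' _ x => r' = r -> x = Some v
  | AUX _ _ _ => True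
  | AUXSET r' X => r' = r -> Some v \in X
  end.

Definition sentP (s : lstate n) (nt : msg -> bool) :=
  [/\ 7*r+2 <= meas s -> nt (BVAL r false (Some v)),
      7*r+3 <= meas s -> nt (AUX r false (Some v)),
      7*r+4 <= meas s -> nt (AUXSET r [set Some v]),
      7*r+5 <= meas s -> nt (BVAL r true (Some v)) &
      7*r+6 <= meas s -> nt (AUX r true (Some v))].

Definition stP (s : lstate n) :=
  [/\ 7*r+2 <= meas s -> started (tags s r false),
      7*r+5 <= meas s -> started (tags s r true),
      7*r+3 <= meas s -> Some v \in bin (tags s r false) &
      7*r+6 <= meas s -> Some v \in bin (tags s r true)].

Definition binP (s : lstate n) :=
  bin (tags s r false) \subset [set Some v] /\ bin (tags s r true) \subset [set Some v].

Definition decP (s : lstate n) :=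
  (forall w r', dec s = Some (w, r') -> r <= r' -> w = v /\ r' = r) /\
  (7*r+7 <= meas s -> dec s <> None).

Definition locP s (nt : 'I_n -> msg -> bool) :=
  [/\ binP s, (forall i, sentP s (nt i)), stP s & decP s].

Lemma J_correct (J : {set 'I_n}) : #|J| = n - t -> exists j, j \notin F /\ j \in J.
Proof.
move=> hJ; apply: (card_gt_ex (P := fun j => j \in J)).
have -> : [set j | j \in J] = J by apply/setP => x; rewrite inE.
lia.
Qed.

Lemma J_ne (J : {set 'I_n}) : #|J| = n - t -> J != set0.
Proof. by move/J_correct => [j [_ hj]]; apply/set0Pn; exists j. Qed.

Lemma nrcv_correct (s : lstate n) m : t < nrcv s m -> exists j, j \notin F /\ rcvd s j m.
Proof. move=> h; apply: (card_gt_ex (P := fun j => rcvd s j m)); exact: leq_ltn_trans HF h. Qed.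

Lemma in_sv (B : {set value}) x : B \subset [set Some v] -> x \in B -> x = Some v.
Proof. by move=> /subsetP h /h; rewrite inE => /eqP. Qed.

Lemma view1_lemma (s : lstate n) (J : {set 'I_n}) (g : 'I_n -> {set value}) :
  (forall j m, j \notin F -> rcvd s j m -> legit m) ->
  bin (tags s r false) \subset [set Some v] ->
  #|J| = n - t ->
  (forall j, j \in J -> rcvd s j (AUXSET r (g j)) && (g j \subset bin (tags s r false))) ->
  \bigcup_(j in J) g j = [set Some v].
Proof.
move=> hrl hb hJ hg.
have [j0 [hj0F hj0J]] := J_correct hJ.
have /andP [hr0 _] := hg j0 hj0J.
have hv : Some v \in g j0 by exact: (hrl _ _ hj0F hr0).
apply/eqP; rewrite eqEsubset; apply/andP; split.
  apply/bigcupsP => j hj; have /andP [_ hs] := hg j hj; exact: subset_trans hs hb.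
by rewrite sub1set; apply/bigcupP; exists j0.
Qed.




Lemma sentP_mono s (nt nt' : msg -> bool) : sentP s nt -> (forall m, nt m -> nt' m) -> sentP s nt'.
Proof. by case=> a1 a2 a3 a4 a5 h; split=> hh; apply: h; auto. Qed.

Ltac nocross := let e := fresh "e" in move=> e; exfalso; match goal with H : meas _ = 7 * _ + _ |- _ => clear -H e end; lia.

Lemma main_meas (s s' : lstate n) o : main_step t s s' o -> meas s' = (meas s).+1.
Proof.
case=> [hpc|hpc|b w hpc hw|J f hpc hJ hf|J g hpc hJ hg|J f coin hpc hJ hf];
rewrite /meas /= hpc; try (simpl; lia); by case: b hpc hw => hpc hw /=; lia.
Qed.

Lemma main_ok s s' o (nt nt' : 'I_n -> msg -> bool) :
  (forall j m, j \notin F -> rcvd s j m -> legit m) ->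
  (pc s = PStart -> rnd s = r -> est s = Some v) ->
  locP s nt -> (forall i' m, nt i' m -> nt' i' m) -> (forall i' m, o = Some m -> nt' i' m) ->
  main_step t s s' o ->
  [/\ locP s' nt', (forall m, o = Some m -> legit m), rcvd s' = rcvd s & meas s' = (meas s).+1].
Proof.
move=> hrl hest [[hb0 hb1] hsent [st0 st1 iv0 iv1] [dec1 dec2]] hmono hsend hms.
have sentM : forall i', sentP s (nt' i') by move=> i'; exact: sentP_mono (hsent i') (hmono i').
move: (main_meas hms) hsend; case: hms => [hpc|hpc|b w hpc hw|J f hpc hJ hf|J g hpc hJ hg|J f coin hpc hJ hf] hm' hsend.
-
  have hm : meas s = 7 * rnd s + 7 by rewrite /meas hpc.
  split=> //; split=> //.
  + move=> i'; case: (sentM i') => a1 a2 a3 a4 a5.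
    split; apply: (thr hm') => //; nocross.
  + split; apply: (thr hm') => //; nocross.
  + split=> //; apply: (thr hm') => //; nocross.
-
  have hm : meas s = 7 * rnd s + 1 by rewrite /meas hpc.
  split=> //; last by move=> m [<-] /=; exact: hest hpc.
  split.
  + by split; rewrite /= /updtag; case: ifP => _ //=; exact: sub0set.
  + move=> i'; case: (sentM i') => a1 a2 a3 a4 a5.
    split; apply: (thr hm') => //; try nocross.
    move=> e; have er : rnd s = r by clear -hm e; lia.
    rewrite -(hest hpc er) -er; exact: hsend.
  + split; apply: (thr hm') => //; try nocross.
    * by move=> h; apply: started_upd; exact: (st0 h).
    * move=> e; have er : rnd s = r by clear -hm e; lia.
      by rewrite /= -er; apply: started_upd_eq.
    * by move=> h; apply: started_upd; exact: (st1 h).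
    * move=> h; rewrite /= upd_ner; first exact: (iv0 h).
      by apply/eqP; clear -hm h; lia.
    * by move=> h; rewrite /= upd_neb //; exact: (iv1 h).
  + split=> //; apply: (thr hm') => //; nocross.
-
  case: b hpc hw hm' hsend => hpc hw hm' hsend.
  + have hm : meas s = 7 * rnd s + 5 by rewrite /meas hpc.
    split=> //; last by move=> m [<-].
    split=> //.
    * move=> i'; case: (sentM i') => a1 a2 a3 a4 a5.
      split; apply: (thr hm') => //; try nocross.
      move=> e; have er : rnd s = r by clear -hm e; lia.
      rewrite er in hw; rewrite -(in_sv hb1 hw) -er; exact: hsend.
    * split; apply: (thr hm') => //; try nocross.
      move=> e; have er : rnd s = r by clear -hm e; lia.
      rewrite er in hw; by rewrite -(in_sv hb1 hw).
    * split=> //; apply: (thr hm') => //; nocross.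
  + have hm : meas s = 7 * rnd s + 2 by rewrite /meas hpc.
    split=> //; last by move=> m [<-].
    split=> //.
    * move=> i'; case: (sentM i') => a1 a2 a3 a4 a5.
      split; apply: (thr hm') => //; try nocross.
      move=> e; have er : rnd s = r by clear -hm e; lia.
      rewrite er in hw; rewrite -(in_sv hb0 hw) -er; exact: hsend.
    * split; apply: (thr hm') => //; try nocross.
      move=> e; have er : rnd s = r by clear -hm e; lia.
      rewrite er in hw; by rewrite -(in_sv hb0 hw).
    * split=> //; apply: (thr hm') => //; nocross.
-
  have hm : meas s = 7 * rnd s + 3 by rewrite /meas hpc.
  have hfJ : rnd s = r -> f @: J = [set Some v].
    move=> er; apply: imset_const1; first exact: J_ne.
    move=> j hj; have /andP [_ hb] := hf j hj; rewrite er in hb; exact: in_sv hb0 hb.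
  split=> //; last by move=> m [<-] /= er; rewrite hfJ // set11.
  split=> //.
  + move=> i'; case: (sentM i') => a1 a2 a3 a4 a5.
    split; apply: (thr hm') => //; try nocross.
    move=> e; have er : rnd s = r by clear -hm e; lia.
    rewrite -hfJ // -er; exact: hsend.
  + split; apply: (thr hm') => //; nocross.
  + split=> //; apply: (thr hm') => //; nocross.
-
  have hm : meas s = 7 * rnd s + 4 by rewrite /meas hpc.
  have hU : rnd s = r -> est_of_view1 (\bigcup_(j in J) g j) = Some v.
    move=> er; rewrite (view1_lemma (s := s) _ _ hJ) ?est_of_view1_1 //.
    by move=> j hj; rewrite -er; apply: hg.
  split=> //; last by move=> m [<-] /=; exact: hU.
  split.
  + by split; rewrite /= /updtag; case: ifP => _ //=; exact: sub0set.
  + move=> i'; case: (sentM i') => a1 a2 a3 a4 a5.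
    split; apply: (thr hm') => //; try nocross.
    move=> e; have er : rnd s = r by clear -hm e; lia.
    rewrite -(hU er) -er; exact: hsend.
  + split; apply: (thr hm') => //; try nocross.
    * by move=> h; apply: started_upd; exact: (st0 h).
    * by move=> h; apply: started_upd; exact: (st1 h).
    * move=> e; have er : rnd s = r by clear -hm e; lia.
      by rewrite /= -er; apply: started_upd_eq.
    * by move=> h; rewrite /= upd_neb //; exact: (iv0 h).
    * move=> h; rewrite /= upd_ner; first exact: (iv1 h).
      by apply/eqP; clear -hm h; lia.
  + split=> //; apply: (thr hm') => //; nocross.
-
  have hm : meas s = 7 * rnd s + 6 by rewrite /meas hpc.
  have hfJ : rnd s = r -> f @: J = [set Some v].
    move=> er; apply: imset_const1; first exact: J_ne.
    move=> j hj; have /andP [_ hb] := hf j hj; rewrite er in hb; exact: in_sv hb1 hb.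
  split=> //; split=> //.
  + move=> i'; case: (sentM i') => a1 a2 a3 a4 a5.
    split; apply: (thr hm') => //; nocross.
  + split; apply: (thr hm') => //; nocross.
  + split.
    * move=> w r' /=.
      case hd: (dec s) => [d|].
        by rewrite dec_after_some // -hd; apply: dec1.
      case: (ltngtP (rnd s) r) => er.
      - by move/dec_after_none => -> hle; exfalso; clear -er hle; lia.
      - by exfalso; apply: dec2 => //; clear -hm er; lia.
      - by rewrite hfJ // dec_after_1 er => -[-> ->].
    * apply: (thr hm') => /=.
        by move=> h; rewrite dec_after_some //; apply: dec2.
      move=> e; have er : rnd s = r by clear -hm e; lia.
      case hd: (dec s) => [d|]; first by rewrite dec_after_some // hd.
      by rewrite hfJ // dec_after_1.
Qed.



Definition I1 (c : config n) := forall i j m, i \notin F -> j \notin F -> rcvd (lst c i) j m -> net c j i m.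
Definition I2 (c : config n) := forall j i m, j \notin F -> net c j i m -> legit m.
Definition Inv c := [/\ I1 c, I2 c & forall j, j \notin F -> locP (lst c j) (net c j)].
Definition EstHyp (c : config n) := forall i, i \notin F -> pc (lst c i) = PStart ->
  rnd (lst c i) = r -> est (lst c i) = Some v.

Lemma locP_same (s s' : lstate n) (nt nt' : 'I_n -> msg -> bool) :
  locP s nt -> (forall i m, nt i m -> nt' i m) -> meas s' = meas s -> dec s' = dec s ->
  (forall b1, bin (tags s' r b1) = bin (tags s r b1)) ->
  (forall b1, started (tags s' r b1) = started (tags s r b1)) -> locP s' nt'.
Proof.
move=> [[hb0 hb1] hsent [st0 st1 iv0 iv1] [dec1 dec2]] hmono hm hd hb hs.
split.
- by rewrite /binP !hb.
- move=> i; rewrite /sentP hm; exact: sentP_mono (hsent i) (hmono i).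
- by rewrite /stP hm !hb !hs.
- by rewrite /decP hm hd.
Qed.

Lemma echo_bin (s : lstate n) r0 b x r1 b1 :
  bin (tags (echo_st s r0 b x) r1 b1) = bin (tags s r1 b1) /\
  started (tags (echo_st s r0 b x) r1 b1) = started (tags s r1 b1).
Proof. by rewrite /echo_st /= /updtag; case: ifP => // /andP [/eqP -> /eqP ->]. Qed.

Lemma add_bin (s : lstate n) r0 b x r1 b1 :
  bin (tags (add_st s r0 b x) r1 b1) =
    (if (r1 == r0) && (b1 == b) then x |: bin (tags s r1 b1) else bin (tags s r1 b1)) /\
  started (tags (add_st s r0 b x) r1 b1) = started (tags s r1 b1).
Proof. by rewrite /add_st /= /updtag; case: ifP => // /andP [/eqP -> /eqP ->]. Qed.

Lemma locP_add (s : lstate n) (nt nt' : 'I_n -> msg -> bool) r0 b x :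
  locP s nt -> (forall i m, nt i m -> nt' i m) -> legit (BVAL r0 b x) ->
  locP (add_st s r0 b x) nt'.
Proof.
move=> [[hb0 hb1] hsent [st0 st1 iv0 iv1] [dec1 dec2]] hmono hl.
have hm : meas (add_st s r0 b x) = meas s by [].
have hgrow : forall b1, bin (tags s r b1) \subset bin (tags (add_st s r0 b x) r b1).
  by move=> b1; case: (add_bin s r0 b x r b1) => -> _; case: ifP => _ //; apply: subsetUr.
have hsub : forall b1, bin (tags s r b1) \subset [set Some v] ->
    bin (tags (add_st s r0 b x) r b1) \subset [set Some v].
  move=> b1 hb; case: (add_bin s r0 b x r b1) => -> _; case: ifP => // /andP [/eqP e _].
  by rewrite subUset hb sub1set inE hl // eqxx.
split.
- by split; apply: hsub.
- move=> i; rewrite /sentP hm; exact: sentP_mono (hsent i) (hmono i).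
- rewrite /stP hm !(proj2 (add_bin _ _ _ _ _ _)); split=> // h.
  + exact: (subsetP (hgrow false)) (iv0 h).
  + exact: (subsetP (hgrow true)) (iv1 h).
- by rewrite /decP hm.
Qed.

Lemma bcast_opt_mono (nt : 'I_n -> 'I_n -> msg -> bool) i o a b m :
  nt a b m -> bcast_opt nt i o a b m.
Proof. by case: o => //= m0; rewrite /bcast => ->. Qed.

Lemma upd_eq (f : 'I_n -> lstate n) i s j : upd f i s j = if j == i then s else f j.
Proof. by []. Qed.

Lemma inv_step c l c' : Inv c -> EstHyp c -> step t F c l c' -> Inv c'.
Proof.
move=> [h1 h2 hl] hest; case=> /=.
-
  move=> i s' o hi hms.
  have hrl : forall j m, j \notin F -> rcvd (lst c i) j m -> legit m.
    by move=> j m hj /(h1 _ _ _ hi hj); apply: h2.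
  have hmono : forall i' m, net c i i' m -> bcast_opt (net c) i o i i' m.
    by move=> i' m; case: o {hms} => //= m0; rewrite /bcast => ->.
  have hsend : forall i' m, o = Some m -> bcast_opt (net c) i o i i' m.
    by move=> i' m ->; rewrite /= /bcast !eqxx orbT.
  have [hloc hleg hrc hme] := main_ok hrl (hest i hi) (hl i hi) hmono hsend hms.
  split.
  + move=> i0 j m hi0 hj; rewrite /= upd_eq; case: eqP => [->|_] h.
      by apply: bcast_opt_mono; apply: h1 => //; rewrite -hrc.
    by apply: bcast_opt_mono; apply: h1.
  + move=> j i0 m hj; case: o {hms hmono hsend hloc} hleg => //= [m0|] hleg; last by apply: h2.
    rewrite /bcast; case/orP; first by apply: h2.
    by case/andP => _ /eqP ->; apply: hleg.
  + move=> j hj; rewrite /= upd_eq; case: eqP => [->|hne]; first exact: hloc.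
    have := hl j hj; case=> a b c0 d; split=> // i0.
    apply: sentP_mono (b i0) _ => m; exact: bcast_opt_mono.
-
  move=> i r0 b x hi hst hn hx.
  have hleg : legit (BVAL r0 b x).
    have [j [hj hr]] := nrcv_correct hn.
    exact: h2 _ _ _ hj (h1 _ _ _ hi hj hr).
  split.
  + move=> i0 j m hi0 hj; rewrite /= upd_eq; case: eqP => [->|_] h;
      rewrite /bcast (h1 _ _ _ _ hj) //; by rewrite -?h.
  + move=> j i0 m hj; rewrite /bcast; case/orP; first by apply: h2.
    by case/andP => _ /eqP ->.
  + move=> j hj; rewrite /= upd_eq; case: eqP => [->|hne].
      apply: (locP_same (hl i hi)) => //.
      * by move=> i0 m; rewrite /bcast => ->.
      * by move=> b1; case: (echo_bin (lst c i) r0 b x r b1).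
      * by move=> b1; case: (echo_bin (lst c i) r0 b x r b1).
    apply: (locP_same (hl j hj)) => // i0 m; by rewrite /bcast => ->.
-
  move=> i r0 b x hi hst hn hx.
  have hleg : legit (BVAL r0 b x).
    have hn' : t < nrcv (lst c i) (BVAL r0 b x) by clear -hn; lia.
    have [j [hj hr]] := nrcv_correct hn'.
    exact: h2 _ _ _ hj (h1 _ _ _ hi hj hr).
  split.
  + move=> i0 j m hi0 hj; rewrite /= upd_eq; case: eqP => [->|_] h; exact: h1.
  + exact: h2.
  + move=> j hj; rewrite /= upd_eq; case: eqP => [->|hne]; last exact: hl.
    exact: locP_add (hl i hi) _ hleg.
-
  move=> j i m hi hnet hnr.
  split.
  + move=> i0 j0 m0 hi0 hj0; rewrite /= upd_eq; case: eqP => [->|_] h; last exact: h1.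
    move: h; rewrite /deliver_st /=; case/orP; first exact: h1.
    by case/andP => /eqP -> /eqP ->.
  + exact: h2.
  + move=> j0 hj0; rewrite /= upd_eq; case: eqP => [->|hne]; last exact: hl.
    exact: (locP_same (hl i hi)).
-
  move=> j i m hj; split.
  + move=> i0 j0 m0 hi0 hj0 h; by rewrite /= (h1 _ _ _ hi0 hj0 h).
  + move=> j0 i0 m0 hj0; case/orP; first exact: h2.
    case/and3P => /eqP e; by rewrite e hj in hj0.
  + move=> j0 hj0; apply: (locP_same (hl j0 hj0)) => // i0 m0 /= ->.
- by split.
- by split.
Qed.



Lemma main_rcvd (s s' : lstate n) o : main_step t s s' o -> rcvd s' = rcvd s.
Proof. by case. Qed.

Lemma main_bin (s s' : lstate n) o b : main_step t s s' o ->
  (b = false -> 7*r+2 <= meas s) -> (b = true -> 7*r+5 <= meas s) ->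
  bin (tags s r b) \subset bin (tags s' r b).
Proof.
case=> [hpc|hpc|b0 w hpc hw|J f hpc hJ hf|J g hpc hJ hg|J f coin hpc hJ hf] //= h0 h1.
- rewrite /updtag; case: ifP => [/andP [/eqP er /eqP eb]|_] //.
  have := h0 eb; rewrite /meas hpc er /=; lia.
- rewrite /updtag; case: ifP => [/andP [/eqP er /eqP eb]|_] //.
  have := h1 eb; rewrite /meas hpc er /=; lia.
Qed.

Section Exec.
Variables (ex : nat -> config n) (lab : nat -> label n).
Hypothesis Hfair : fair_execution t F ex lab.
Hypothesis Hest : forall k, EstHyp (ex k).
Hypothesis Hr : 0 < r.

Lemma Hstep k : step t F (ex k) (lab k) (ex k.+1).
Proof. by case: Hfair => _ [h _]. Qed.

Lemma lift (P : nat -> Prop) : (forall k, P k -> P k.+1) -> forall k k', k <= k' -> P k -> P k'.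
Proof.
move=> h k k' /subnK <-; elim: (k' - k) => [|d ih] //= hk; apply: h; exact: ih.
Qed.

Lemma Inv0 : Inv (ex 0).
Proof.
case: Hfair => [[[prop hp] hnet] _].
split.
- by move=> i j m hi _; rewrite hp.
- by move=> j i m _; rewrite hnet.
- move=> j hj; rewrite hp //.
  split.
  + by split; apply: sub0set.
  + by move=> i; split; move=> h; exfalso; rewrite /meas /= in h; clear -h Hr; lia.
  + by split; move=> h; exfalso; rewrite /meas /= in h; clear -h Hr; lia.
  + by split=> //; move=> h; exfalso; rewrite /meas /= in h; clear -h Hr; lia.
Qed.

Lemma Inv_all k : Inv (ex k).
Proof.
elim: k => [|k ih]; first exact: Inv0.
exact: (inv_step ih (@Hest k) (Hstep k)).
Qed.



Lemma net_mono_step c l c' a b m : step t F c l c' -> net c a b m -> net c' a b m.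
Proof.
case=> /=.
- by move=> i s' o _ _; apply: bcast_opt_mono.
- by move=> *; rewrite /bcast; apply/orP; left.
- by [].
- by [].
- by move=> j i m0 _ ->.
- by [].
Qed.

Lemma rcvd_mono_step c l c' i j m : step t F c l c' -> rcvd (lst c i) j m -> rcvd (lst c' i) j m.
Proof.
case=> /=.
- move=> i0 s' o _ hms; rewrite upd_eq; case: eqP => [e|]; try subst; try done.
  by rewrite (main_rcvd hms).
- by move=> i0 *; rewrite upd_eq; case: eqP => [e|]; try subst.
- by move=> i0 *; rewrite upd_eq; case: eqP => [e|]; try subst.
- move=> j0 i0 m0 _ _ _ h; rewrite upd_eq; case: eqP => [e|]; try subst; try done.
  by rewrite /deliver_st /= h.
- by [].
- by [].
Qed.

Lemma meas_mono_step c l c' i : step t F c l c' -> meas (lst c i) <= meas (lst c' i).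
Proof.
case=> /=.
- move=> i0 s' o _ hms; rewrite upd_eq; case: eqP => [e|]; try subst; try done.
  by rewrite (main_meas hms).
- by move=> i0 *; rewrite upd_eq; case: eqP => [e|]; try subst.
- by move=> i0 *; rewrite upd_eq; case: eqP => [e|]; try subst.
- by move=> j0 i0 *; rewrite upd_eq; case: eqP => [e|]; try subst.
- by [].
- by [].
Qed.

Lemma meas_main_step c c' i : step t F c (LMain i) c' -> meas (lst c' i) = (meas (lst c i)).+1.
Proof.
move e: (LMain i) => l hs; case: hs e => //= i0 s' o _ hms [->].
by rewrite upd_eq eqxx (main_meas hms).
Qed.

Lemma deliver_step c c' j i m : step t F c (LDeliver j i m) c' -> rcvd (lst c' i) j m.
Proof.
move e: (LDeliver j i m) => l hs; case: hs e => //= j0 i0 m0 _ _ _ [-> -> ->].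
by rewrite upd_eq eqxx /deliver_st /= !eqxx orbT.
Qed.

Lemma add_step c c' i r0 b x : step t F c (LAdd i r0 b x) c' -> x \in bin (tags (lst c' i) r0 b).
Proof.
move e: (LAdd i r0 b x) => l hs; case: hs e => //= i1 r1 b1 x1 _ _ _ _ [-> -> -> ->].
by rewrite upd_eq eqxx /= /updtag !eqxx /= setU11.
Qed.

Lemma bin_mono_step c l c' i b : step t F c l c' ->
  (b = false -> 7*r+2 <= meas (lst c i)) -> (b = true -> 7*r+5 <= meas (lst c i)) ->
  bin (tags (lst c i) r b) \subset bin (tags (lst c' i) r b).
Proof.
case=> /=.
- move=> i0 s' o _ hms h0 h1; rewrite upd_eq; case: eqP => [e|_] //.
  by subst i0; exact: main_bin hms h0 h1.
- move=> i0 r0 b0 x *; rewrite upd_eq; case: eqP => [e|_]; try subst; try done.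
  by case: (echo_bin (lst c i0) r0 b0 x r b) => ->.
- move=> i0 r0 b0 x *; rewrite upd_eq; case: eqP => [e|_]; try subst; try done.
  by case: (add_bin (lst c i0) r0 b0 x r b) => -> _; case: ifP => _ //; apply: subsetUr.
- by move=> j0 i0 *; rewrite upd_eq; case: eqP => [e|]; try subst.
- by [].
- by [].
Qed.

Lemma net_mono k k' a b m : k <= k' -> net (ex k) a b m -> net (ex k') a b m.
Proof. apply: (lift (P := fun k => net (ex k) a b m)) => k0; exact: net_mono_step (Hstep k0). Qed.
Lemma rcvd_mono k k' i j m : k <= k' -> rcvd (lst (ex k) i) j m -> rcvd (lst (ex k') i) j m.
Proof. apply: (lift (P := fun k => rcvd (lst (ex k) i) j m)) => k0; exact: rcvd_mono_step (Hstep k0). Qed.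
Lemma meas_mono k k' i T : k <= k' -> T <= meas (lst (ex k) i) -> T <= meas (lst (ex k') i).
Proof.
apply: (lift (P := fun k => T <= meas (lst (ex k) i))) => k0 h.
exact: leq_trans h (meas_mono_step i (Hstep k0)).
Qed.

Lemma fire k l : fair_lab F l -> (forall k', k <= k' -> enabled t F (ex k') l) ->
  exists k', k <= k' /\ step t F (ex k') l (ex k'.+1).
Proof.
case: Hfair => _ [_ hf] hl he; have [k' [hk' e]] := hf k l hl he.
by exists k'; split=> //; rewrite -e; apply: Hstep.
Qed.



Lemma ev_all (P : 'I_n -> nat -> Prop) :
  (forall j k k', k <= k' -> P j k -> P j k') ->
  (forall j, j \notin F -> exists k, P j k) -> exists K, forall j, j \notin F -> P j K.
Proof.
move=> hm he.
suff [K hK] : exists K, forall j, j \in enum 'I_n -> j \notin F -> P j K.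
  by exists K => j; apply: hK; rewrite mem_enum.
elim: (enum 'I_n) => [|x s [K ih]]; first by exists 0.
case: (boolP (x \in F)) => hx.
  exists K => j; rewrite inE => /orP [/eqP -> |hj]; first by rewrite hx.
  exact: ih.
have [kx hkx] := he x hx.
exists (maxn K kx) => j; rewrite inE => /orP [/eqP -> _|hj hjF].
  exact: hm (leq_maxr _ _) hkx.
exact: hm (leq_maxl _ _) (ih j hj hjF).
Qed.

Lemma deliver_ev i j m k : i \notin F -> j \notin F -> net (ex k) j i m ->
  exists k', rcvd (lst (ex k') i) j m.
Proof.
move=> hi hj hn; apply: NNPP => hno.
have hen : forall k', k <= k' -> enabled t F (ex k') (LDeliver j i m).
  move=> k' hk'; eexists; apply: (St_deliver t hi).
  - exact: net_mono hk' hn.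
  - by apply/negP => h; apply: hno; exists k'.
have [k' [_ hs]] := fire (l := LDeliver j i m) hj hen.
by apply: hno; exists k'.+1; exact: deliver_step hs.
Qed.

Lemma recv_all i m : i \notin F -> (forall j, j \notin F -> exists k, net (ex k) j i m) ->
  exists K, forall k, K <= k -> forall j, j \notin F -> rcvd (lst (ex k) i) j m.
Proof.
move=> hi hs.
have [K hK] : exists K, forall j, j \notin F -> rcvd (lst (ex K) i) j m.
  apply: (ev_all (P := fun j k => rcvd (lst (ex k) i) j m)).
    by move=> j k k' hk; apply: rcvd_mono.
  move=> j hj; have [k hk] := hs j hj; exact: deliver_ev hi hj hk.
by exists K => k hk j hj; apply: rcvd_mono hk (hK j hj).
Qed.

Lemma nrcv_all (s : lstate n) m : (forall j, j \notin F -> rcvd s j m) -> n - t <= nrcv s m.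
Proof.
move=> h; rewrite /nrcv.
have : ~: F \subset [set j | rcvd s j m] by apply/subsetP => j; rewrite !inE; apply: h.
move/subset_leq_card => h1; apply: leq_trans h1.
have h2 := cardsC F; rewrite card_ord in h2; rewrite -{1}h2; clear -HF; lia.
Qed.

Lemma J_ex : exists J : {set 'I_n}, J \subset ~: F /\ #|J| = n - t.
Proof.
apply: sub_card_ex; have h2 := cardsC F; rewrite card_ord in h2; rewrite -{1}h2; clear -HF; lia.
Qed.

Lemma decode (s : lstate n) o : meas s = 7 * r + o -> 1 <= o <= 7 ->
  rnd s = r /\ ordpc (pc s) = o.
Proof. move=> h ho; have := ordpc_bnd (pc s); rewrite /meas in h; clear -h ho; lia. Qed.

Lemma en_main c j s' o : j \notin F -> main_step t (lst c j) s' o -> enabled t F c (LMain j).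
Proof. by move=> hj hms; eexists; exact: St_main hj hms. Qed.

Definition reach T := forall j, j \notin F -> exists k, T <= meas (lst (ex k) j).

Lemma reach_le T T' : reach T -> T' <= T -> reach T'.
Proof. move=> h hle j hj; have [k hk] := h j hj; exists k; exact: leq_trans hle hk. Qed.

Lemma stage T : reach T ->
  (forall j, j \notin F -> forall K, (forall k, K <= k -> meas (lst (ex k) j) = T) ->
     exists K', forall k, K' <= k -> enabled t F (ex k) (LMain j)) ->
  reach T.+1.
Proof.
move=> hr he j hj; apply: NNPP => hn.
have [k0 hk0] := hr j hj.
have stuck : forall k, k0 <= k -> meas (lst (ex k) j) = T.
  move=> k hk; have h1 := meas_mono hk hk0.
  have h2 : ~ T.+1 <= meas (lst (ex k) j) by move=> h; apply: hn; exists k.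
  clear -h1 h2; lia.
have [K' hK'] := he j hj k0 stuck.
have hen : forall k, maxn k0 K' <= k -> enabled t F (ex k) (LMain j).
  by move=> k hk; apply: hK'; exact: leq_trans (leq_maxr _ _) hk.
have [k [hk hs]] := fire (l := LMain j) isT hen.
have hk1 : k0 <= k by exact: leq_trans (leq_maxl _ _) hk.
have := meas_main_step hs; rewrite (stuck k hk1) (stuck k.+1 (leq_trans hk1 (leqnSn _))).
clear; lia.
Qed.



Definition Tb (b : bool) := if b then 7*r+5 else 7*r+2.
Definition Tc (b : bool) := if b then 7*r+6 else 7*r+3.

Lemma locP_at k j : j \notin F -> locP (lst (ex k) j) (net (ex k) j).
Proof. by move=> hj; case: (Inv_all k) => _ _ hl; apply: hl. Qed.

Lemma sent_bval b j i k : j \notin F -> Tb b <= meas (lst (ex k) j) ->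
  net (ex k) j i (BVAL r b (Some v)).
Proof.
move=> hj h; case: (locP_at k hj) => _ hs _ _; case: (hs i) => a1 _ _ a4 _.
by case: b h => /= h; [apply: a4 | apply: a1].
Qed.

Lemma sent_aux b j i k : j \notin F -> Tc b <= meas (lst (ex k) j) ->
  net (ex k) j i (AUX r b (Some v)).
Proof.
move=> hj h; case: (locP_at k hj) => _ hs _ _; case: (hs i) => _ a2 _ _ a5.
by case: b h => /= h; [apply: a5 | apply: a2].
Qed.

Lemma started_b b j k : j \notin F -> Tb b <= meas (lst (ex k) j) ->
  started (tags (lst (ex k) j) r b).
Proof.
move=> hj h; case: (locP_at k hj) => _ _ [s0 s1 _ _] _.
by case: b h => /= h; [apply: s1 | apply: s0].
Qed.

Lemma inbin_c b j k : j \notin F -> Tc b <= meas (lst (ex k) j) ->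
  Some v \in bin (tags (lst (ex k) j) r b).
Proof.
move=> hj h; case: (locP_at k hj) => _ _ [_ _ i0 i1] _.
by case: b h => /= h; [apply: i1 | apply: i0].
Qed.

Lemma bin_ev b j k0 : reach (Tb b) -> j \notin F -> Tb b <= meas (lst (ex k0) j) ->
  exists K, forall k, K <= k -> Some v \in bin (tags (lst (ex k) j) r b).
Proof.
move=> hr hj hk0.
have [K1 hK1] : exists K, forall k, K <= k -> forall j', j' \notin F ->
    rcvd (lst (ex k) j) j' (BVAL r b (Some v)).
  apply: recv_all hj _ => j' hj'; have [k hk] := hr j' hj'.
  by exists k; apply: sent_bval.
have hex : exists k1, maxn k0 K1 <= k1 /\ Some v \in bin (tags (lst (ex k1) j) r b).
  apply: NNPP => hno.
  have hen : forall k, maxn k0 K1 <= k -> enabled t F (ex k) (LAdd j r b (Some v)).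
    move=> k hk; eexists; apply: (St_add hj).
    - apply: started_b hj _; exact: meas_mono (leq_trans (leq_maxl _ _) hk) hk0.
    - have h := nrcv_all (hK1 k (leq_trans (leq_maxr _ _) hk)); clear -h Hn; lia.
    - by apply/negP => hin; apply: hno; exists k.
  have [k [hk hs]] := fire (l := LAdd j r b (Some v)) isT hen.
  apply: hno; exists k.+1; split; [exact: leq_trans hk (leqnSn _) | exact: add_step hs].
have [k1 [hk1 hin]] := hex.
exists k1 => k hk.
have hk01 : k0 <= k1 by exact: leq_trans (leq_maxl _ _) hk1.
suff : Tb b <= meas (lst (ex k) j) /\ Some v \in bin (tags (lst (ex k) j) r b) by case.
apply: (lift (P := fun k => Tb b <= meas (lst (ex k) j) /\ Some v \in bin (tags (lst (ex k) j) r b))) hk _.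
  move=> k2 [h1 h2]; split; first exact: leq_trans h1 (meas_mono_step j (Hstep k2)).
  apply: (subsetP (@bin_mono_step _ _ _ j b (Hstep k2) _ _)) h2.
    by move=> e; move: h1; rewrite e.
  by move=> e; move: h1; rewrite e.
split=> //; exact: meas_mono hk01 hk0.
Qed.



Lemma stageA : reach (7*r+1) -> reach (7*r+2).
Proof.
move=> hr; apply: reach_le (stage hr _) _; last by rewrite addnS.
move=> j hj K hK; exists K => k hk.
have [er ho] := decode (hK k hk) isT.
have hpc : pc (lst (ex k) j) = PStart by move: ho; case: (pc _) => [| |[]|[]|].
exact: (en_main hj (MS_start t hpc)).
Qed.

Lemma stageE : reach (7*r+7) -> reach (7*r+8).
Proof.
move=> hr; apply: reach_le (stage hr _) _; last by rewrite addnS.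
move=> j hj K hK; exists K => k hk.
have [er ho] := decode (hK k hk) isT.
have hpc : pc (lst (ex k) j) = PInc by move: ho; case: (pc _) => [| |[]|[]|].
exact: (en_main hj (MS_inc t hpc)).
Qed.

Lemma stageB b : reach (Tb b) -> reach (Tb b).+1.
Proof.
move=> hr; apply: (stage (T := _) hr) => j hj K hK.
have hK0 : Tb b <= meas (lst (ex K) j) by rewrite hK.
have [K2 hK2] := bin_ev hr hj hK0.
exists (maxn K K2) => k hk.
have hkK : K <= k := leq_trans (leq_maxl _ _) hk.
have hm := hK k hkK.
have [er ho] : rnd (lst (ex k) j) = r /\ ordpc (pc (lst (ex k) j)) = (if b then 5 else 2).
  by case: b {hr hK hK2 hK0} hm => /= hm; apply: decode.
have hpc : pc (lst (ex k) j) = PWaitBin b.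
  by move: ho; case: b {hr hK hK2 hm hK0}; case: (pc _) => [| |[]|[]|].
have hw : Some v \in bin (tags (lst (ex k) j) (rnd (lst (ex k) j)) b).
  rewrite er; exact: hK2 (leq_trans (leq_maxr _ _) hk).
exact: (en_main hj (MS_aux t hpc hw)).
Qed.

Lemma stageC b : reach (Tc b) -> reach (Tc b).+1.
Proof.
move=> hr; apply: (stage (T := _) hr) => j hj K hK.
have [K1 hK1] : exists K, forall k, K <= k -> forall j', j' \notin F ->
    rcvd (lst (ex k) j) j' (AUX r b (Some v)).
  apply: recv_all hj _ => j' hj'; have [k hk] := hr j' hj'.
  by exists k; apply: sent_aux.
have [J [hJF hJ]] := J_ex.
exists (maxn K K1) => k hk.
have hkK : K <= k := leq_trans (leq_maxl _ _) hk.
have hm := hK k hkK.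
have [er ho] : rnd (lst (ex k) j) = r /\ ordpc (pc (lst (ex k) j)) = (if b then 6 else 3).
  by case: b {hr hK hK1} hm => /= hm; apply: decode.
have hin := inbin_c hj (eq_leq (esym hm)).
have hf : forall j', j' \in J -> rcvd (lst (ex k) j) j' (AUX (rnd (lst (ex k) j)) b (Some v)) &&
    (Some v \in bin (tags (lst (ex k) j) (rnd (lst (ex k) j)) b)).
  move=> j' hj'; rewrite er hin andbT; apply: (hK1 k (leq_trans (leq_maxr _ _) hk)).
  by have := subsetP hJF j' hj'; rewrite inE.
case: b {hr hK hK1 hm hin} ho hf => ho hf.
- have hpc : pc (lst (ex k) j) = PWaitAux true by move: ho; case: (pc _) => [| |[]|[]|].
  exact: (en_main hj (MS_view2 (f := fun _ => Some v) false hpc hJ hf)).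
- have hpc : pc (lst (ex k) j) = PWaitAux false by move: ho; case: (pc _) => [| |[]|[]|].
  exact: (en_main hj (MS_view0 (f := fun _ => Some v) hpc hJ hf)).
Qed.

Lemma stageD : reach (7*r+4) -> reach (7*r+5).
Proof.
move=> hr; apply: reach_le (stage hr _) _; last by rewrite addnS.
move=> j hj K hK.
have [K1 hK1] : exists K, forall k, K <= k -> forall j', j' \notin F ->
    rcvd (lst (ex k) j) j' (AUXSET r [set Some v]).
  apply: recv_all hj _ => j' hj'; have [k hk] := hr j' hj'.
  exists k; case: (locP_at k hj') => _ hs _ _; case: (hs j) => _ _ a3 _ _; exact: a3.
have [J [hJF hJ]] := J_ex.
exists (maxn K K1) => k hk.
have hkK : K <= k := leq_trans (leq_maxl _ _) hk.
have hm := hK k hkK.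
have [er ho] := decode hm isT.
have hin : Some v \in bin (tags (lst (ex k) j) r false).
  by apply: (inbin_c (b := false) hj); rewrite hm /Tc; clear; lia.
have hg : forall j', j' \in J -> rcvd (lst (ex k) j) j' (AUXSET (rnd (lst (ex k) j)) ((fun _ => [set Some v]) j')) &&
    ((fun _ => [set Some v]) j' \subset bin (tags (lst (ex k) j) (rnd (lst (ex k) j)) false)).
  move=> j' hj'; rewrite er sub1set hin andbT; apply: (hK1 k (leq_trans (leq_maxr _ _) hk)).
  by have := subsetP hJF j' hj'; rewrite inE.
have hpc : pc (lst (ex k) j) = PWaitAuxset by move: ho; case: (pc _) => [| |[]|[]|].
exact: (en_main hj (MS_view1 hpc hJ hg)).
Qed.

Lemma live_all : (forall i, i \notin F -> exists k, pc (lst (ex k) i) = PStart /\ rnd (lst (ex k) i) = r) ->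
  reach (7*r+8).
Proof.
move=> h.
have h1 : reach (7*r+1).
  move=> j hj; have [k [hp hr']] := h j hj; exists k; by rewrite /meas hp hr'.
have h3 : reach (7*r+3) by apply: reach_le (stageB (b := false) (stageA h1)) _; rewrite /Tb addnS.
have h4 : reach (7*r+4) by apply: reach_le (stageC (b := false) h3) _; rewrite /Tc addnS.
have h6 : reach (7*r+6) by apply: reach_le (stageB (b := true) (stageD h4)) _; rewrite /Tb addnS.
have h7 : reach (7*r+7) by apply: reach_le (stageC (b := true) h6) _; rewrite /Tc addnS.
exact: stageE h7.
Qed.



Lemma r_pos : (forall i, i \notin F -> exists k, pc (lst (ex k) i) = PStart /\ rnd (lst (ex k) i) = r) ->
  0 < r.
Proof.
move=> h.
have [i [hi _]] : exists i, i \notin F /\ predT i.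
  apply: card_gt_ex; have -> : [set j | predT j] = [set: 'I_n] by apply/setP => x; rewrite !inE.
  rewrite cardsT card_ord; clear -HF Hn; lia.
have [k [hp hr]] := h i hi.
have h0 : 7 <= meas (lst (ex 0) i).
  case: Hfair => [[[prop hprop] _] _]; by rewrite hprop.
have := meas_mono (leq0n k) h0; rewrite /meas hp hr /=; clear; lia.
Qed.

Lemma main_all : (forall i, i \notin F -> exists k, pc (lst (ex k) i) = PStart /\ rnd (lst (ex k) i) = r) ->
  (forall i, i \notin F -> exists k, r < rnd (lst (ex k) i)) /\
  (forall i k, i \notin F -> r < rnd (lst (ex k) i) ->
     dec (lst (ex k) i) = Some (v, r) \/
     exists w r', r' < r /\ dec (lst (ex k) i) = Some (w, r')) /\
  (forall i k w r', i \notin F -> dec (lst (ex k) i) = Some (w, r') -> r <= r' -> w = v).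
Proof.
move=> h; split; [|split].
- move=> i hi; have [k hk] := @live_all h i hi; exists k.
  move: hk; rewrite /meas; have := ordpc_bnd (pc (lst (ex k) i)); clear; lia.
- move=> i k hi hrk; case: (locP_at k hi) => _ _ _ [d1 d2].
  have hm : 7 * r + 7 <= meas (lst (ex k) i).
    rewrite /meas; have := ordpc_bnd (pc (lst (ex k) i)); clear -hrk; lia.
  have := d2 hm; case hd: (dec _) => [[w r']|] // _.
  case: (leqP r r') => hle.
    by have [-> ->] := d1 w r' hd hle; left.
  by right; exists w, r'.
- move=> i k w r' hi hd hle; case: (locP_at k hi) => _ _ _ [d1 _].
  by have [] := d1 w r' hd hle.
Qed.

End Exec.
End Main.


Unset Implicit Arguments.

Theorem lemma8 (n t : nat) (F : {set 'I_n})
    (ex : nat -> config n) (lab : nat -> label n) (r : nat) (v : bool) :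
  3 * t < n -> #|F| <= t ->
  fair_execution t F ex lab ->
  (* every non-faulty process starts round r ... *)
  (forall i, i \notin F -> exists k, pc (lst (ex k) i) = PStart /\ rnd (lst (ex k) i) = r) ->
  (* ... and does so with estimate v *)
  (forall i k, i \notin F -> pc (lst (ex k) i) = PStart -> rnd (lst (ex k) i) = r ->
     est (lst (ex k) i) = Some v) ->
  (* every non-faulty process completes round r *)
  (forall i, i \notin F -> exists k, r < rnd (lst (ex k) i)) /\
  (* after round r it has decided v in round r, unless it had decided before round r *)
  (forall i k, i \notin F -> r < rnd (lst (ex k) i) ->
     dec (lst (ex k) i) = Some (v, r) \/
     exists w r', r' < r /\ dec (lst (ex k) i) = Some (w, r')) /\
  (* no non-faulty process decides a value other than v in round r or later *)
  (forall i k w r', i \notin F -> dec (lst (ex k) i) = Some (w, r') -> r <= r' -> w = v).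
Proof.
move=> Hn HF Hfair H4 H5.
have hr := r_pos Hn HF Hfair H4.
have Hest : forall k, EstHyp F r v (ex k) by move=> k i hi hp hrr; exact: H5.
exact: (main_all Hn HF Hfair Hest hr H4).
Qed.
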